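(* If an invariant state $\rho$ is supported on $\Omega=\{|-\rangle,|+\rangle,\varphi_{0_1},\varphi_{0_N}\}^\perp$, then $\rho$ is supported on $V$.
   Context: Fix integers $N\ge 2$ and $n_1\ge n_2\ge\dots\ge n_N\ge 1$. Let $\mathcal H$ be a finite-dimensional complex Hilbert space with orthonormal basis $\{|-\rangle,|+\rangle\}\cup\{|a_k\rangle:1\le k\le N,\ 0\le a\le n_k-1\}$. For vectors $x,y$, $|x\rangle\langle y|$ denotes the operator $u\mapsto\langle y,u\rangle x$. Put $E_k=\mathrm{span}\{|a_k\rangle:0\le a\le n_k-1\}$, $P_k$ the orthogonal projection onto $E_k$, $P_\pm=|\pm\rangle\langle\pm|$, $\zeta_k=e^{2\pi i/n_k}$, and $\varphi_{a_k}=n_k^{-1/2}\sum_{b=0}^{n_k-1}\zeta_k^{-ba}|b_k\rangle$ for $0\le a\le n_k-1$. For $1\le k\le N-1$ let $Z_k=n_k^{-1/2}\sum_{b=0}^{n_{k+1}-1}\sum_{a=0}^{n_k-1}\zeta_k^{ba}|b_{k+1}\rangle\langle a_k|$ (an operator on $\mathcal H$), $|Z|_k=Z_k^*Z_k$. The transport operator is $Z=\sum_{k=1}^{N-1}Z_k$. Let $\omega$ range over the set $\{\omega_+,\omega_-,\omega_1,\dots,\omega_{N-1}\}$ of (distinct) Bohr frequencies, and let $\Gamma_{\pm,\omega}>0$, $\gamma_{\pm,\omega}\in\mathbb R$ be constants. Kraus operators: $L_{-,\omega_+}=\sqrt{n_1\Gamma_{-,\omega_+}}|\varphi_{0_1}\rangle\langle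 +|$, $L_{+,\omega_+}=\sqrt{n_1\Gamma_{+,\omega_+}}|+\rangle\langle\varphi_{0_1}|$, $L_{-,\omega_k}=\sqrt{\Gamma_{-,\omega_k}}Z_k$, $L_{+,\omega_k}=\sqrt{\Gamma_{+,\omega_k}}Z_k^*$ ($1\le k\le N-1$), $L_{-,\omega_-}=\sqrt{\Gamma_{-,\omega_-}}|-\rangle\langle\varphi_{0_N}|$, $L_{+,\omega_-}=0$. Effective Hamiltonian $H_{\mathrm{eff}}=n_1\gamma_{-,\omega_+}P_+-n_1\gamma_{+,\omega_+}|\varphi_{0_1}\rangle\langle\varphi_{0_1}|+\gamma_{-,\omega_-}|\varphi_{0_N}\rangle\langle\varphi_{0_N}|-\gamma_{+,\omega_-}P_-+\sum_{k=1}^{N-1}(\gamma_{-,\omega_k}|Z|_k-\gamma_{+,\omega_k}P_{k+1})$. The generator is $\mathcal L(\rho)=-i[H_{\mathrm{eff}},\rho]+\sum_{\omega}\sum_{\epsilon=\pm}\big(L_{\epsilon,\omega}\rho L_{\epsilon,\omega}^*-\tfrac12\{L_{\epsilon,\omega}^*L_{\epsilon,\omega},\rho\}\big)$. A state is a positive operator of trace one; it is invariant if $\mathcal L(\rho)=0$; an operator is supported on a subspace $E$ if its range is contained in $E$. $V$ is the orthogonal complement of the set $\{|-\rangle,|+\rangle,Z^n\varphi_{0_1},Z^{*n}\varphi_{0_N},Z^{*s}\varphi_{0_{2m+1}}:0\le n\le N-1,\ 1\le m\le (N-1)/2,\ 1\le s\le 2m\}$. *)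

(* Defs.v *)
From mathcomp Require Import all_boot all_order all_algebra.
From mathcomp Require Import complex.
From mathcomp Require Import reals trigo.
Import Order.TTheory GRing.Theory Num.Theory.
Local Open Scope ring_scope.

(* Conventions.
   - The complex numbers are C := R[i] for an arbitrary R : realType.
   - Levels k = 1..N of the paper are indexed 0..N-1 here (k_here = k_paper - 1);
     the multiplicities are n : nat -> nat, only n 0 .. n (N-1) matter.
   - The Hilbert space H has orthonormal basis indexed by the finite type
     idx = bool + {k : 'I_N & 'I_(n k)}  (inl false = |->, inl true = |+>,
     inr (k; a) = |a_{k+1}> in the paper's numbering).  H is realised as the
     column vectors 'cV[C]_#|idx|, the basis vector of x being delta at enum_rank x.
   - Operators are square matrices; adj A is the conjugate transpose (A^* ),
     ketbra x y = |x><y| = x y^*, and <y,u> = (y^* u) (antilinear in y).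
   - Signs epsilon = +,- are encoded by true,false; Bohr frequencies by
     bohr = bool + 'I_(N-1): inl true = omega_+, inl false = omega_-,
     inr j = omega_{j+1} (paper numbering). *)

Section Model.
Variable R : realType.
Variable N : nat.
Variable n : nat -> nat.

Local Notation C := R[i].

Definition idx : finType := (bool + {k : 'I_N & 'I_(n k)})%type.
Definition hdim : nat := #|{: idx}|.

Local Notation vec := 'cV[C]_hdim.
Local Notation op := 'M[C]_hdim.

Definition adj (p q : nat) (A : 'M[C]_(p, q)) : 'M[C]_(q, p) :=
  (map_mx Num.conj A)^T.
Arguments adj {p q} A.

Definition ketbra (u v : vec) : op := u *m adj v.

Definition inner (u v : vec) : C := (adj u *m v) 0 0.

Definition idx_of (i : 'I_hdim) : idx := enum_val i.

Definition ket (x : idx) : vec := delta_mx (enum_rank x) 0.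

Definition ketpm (b : bool) : vec := ket (inl b).

(* |a_k> (0-based level k, 0 <= a < n k); zero if (k,a) is out of range *)
Definition ketn (k a : nat) : vec :=
  \col_i (if idx_of i is inr s
          then (((tag s : nat) == k) && ((tagged s : nat) == a))%:R
          else 0).

Definition RtoC (x : R) : C := Complex x 0.

Definition zeta (m : nat) : C :=
  Complex (cos (2 * pi / m%:R)) (sin (2 * pi / m%:R)).

Definition isqrt (m : nat) : C := RtoC (Num.sqrt (m%:R : R))^-1.

Definition phi (k a : nat) : vec :=
  isqrt (n k) *: \sum_(b < n k) (zeta (n k) ^- (b * a)) *: ketn k b.

Definition Zk (k : nat) : op :=
  isqrt (n k) *: \sum_(b < n k.+1) \sum_(a < n k)
     (zeta (n k) ^+ (b * a)) *: ketbra (ketn k.+1 b) (ketn k a).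

Definition absZ (k : nat) : op := adj (Zk k) *m Zk k.

Definition Zop : op := \sum_(k < N.-1) Zk k.

Definition Pk (k : nat) : op := \sum_(a < n k) ketbra (ketn k a) (ketn k a).
Definition Ppm (b : bool) : op := ketbra (ketpm b) (ketpm b).

Definition bohr : finType := (bool + 'I_N.-1)%type.

Variable Gamma : bool -> bohr -> R.
Variable gam : bool -> bohr -> R.

Definition sqrtC (x : R) : C := RtoC (Num.sqrt x).

Definition phi01 : vec := phi 0 0.
Definition phi0N : vec := phi N.-1 0.

Definition kraus (eps : bool) (w : bohr) : op :=
  match w with
  | inl true =>
      if eps then sqrtC ((n 0)%:R * Gamma true w) *: ketbra (ketpm true) phi01
      else sqrtC ((n 0)%:R * Gamma false w) *: ketbra phi01 (ketpm true)
  | inl false =>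
      if eps then 0
      else sqrtC (Gamma false w) *: ketbra (ketpm false) phi0N
  | inr j =>
      if eps then sqrtC (Gamma true w) *: adj (Zk j)
      else sqrtC (Gamma false w) *: Zk j
  end.

Definition wplus : bohr := inl true.
Definition wminus : bohr := inl false.
Definition wk (j : 'I_N.-1) : bohr := inr j.

Definition Heff : op :=
  RtoC ((n 0)%:R * gam false wplus) *: Ppm true
  - RtoC ((n 0)%:R * gam true wplus) *: ketbra phi01 phi01
  + RtoC (gam false wminus) *: ketbra phi0N phi0N
  - RtoC (gam true wminus) *: Ppm false
  + \sum_(j < N.-1) (RtoC (gam false (wk j)) *: absZ j
                     - RtoC (gam true (wk j)) *: Pk j.+1).

Definition Lgen (rho : op) : op :=
  - 'i *: (Heff *m rho - rho *m Heff)
  + \sum_(w : bohr) \sum_(eps : bool)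
      (kraus eps w *m rho *m adj (kraus eps w)
       - 2^-1 *: (adj (kraus eps w) *m kraus eps w *m rho
                  + rho *m (adj (kraus eps w) *m kraus eps w))).

Definition positive_op (A : op) : Prop := forall v : vec, 0 <= inner v (A *m v).
Definition is_state (rho : op) : Prop := positive_op rho /\ \tr rho = 1.
Definition is_invariant (rho : op) : Prop := Lgen rho = 0.

Definition orth_compl (S : vec -> Prop) : vec -> Prop :=
  fun v => forall w, S w -> inner w v = 0.
Definition supported_on (A : op) (E : vec -> Prop) : Prop :=
  forall u : vec, E (A *m u).

Definition Omega_gens (w : vec) : Prop :=
  w = ketpm false \/ w = ketpm true \/ w = phi01 \/ w = phi0N.
Definition Omega : vec -> Prop := orth_compl Omega_gens.

(* generators of V^perp; paper level 2m+1 is level 2m here *)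
Definition V_gens (w : vec) : Prop :=
  w = ketpm false \/ w = ketpm true
  \/ (exists m, (m <= N - 1)%N /\ w = Zop ^+ m *m phi01)
  \/ (exists m, (m <= N - 1)%N /\ w = (adj Zop) ^+ m *m phi0N)
  \/ (exists m s, (1 <= m <= (N - 1) %/ 2)%N /\ (1 <= s <= 2 * m)%N
                  /\ w = (adj Zop) ^+ s *m phi (2 * m) 0).
Definition V : vec -> Prop := orth_compl V_gens.

End Model.

(* Main.v *)
Require Import Defs.
From mathcomp Require Import all_boot all_order all_algebra.
From mathcomp Require Import complex.
From mathcomp Require Import reals trigo.
From mathcomp Require Import ring zify.
Import Order.TTheory GRing.Theory Num.Theory.
Local Open Scope ring_scope.

Section LinAlg.
Variable R : realType.
Local Notation C := R[i].
Local Notation adj := (adj R _ _).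

Lemma adj_mul p q r (A : 'M[C]_(p, q)) (B : 'M[C]_(q, r)) :
  adj (A *m B) = adj B *m adj A.
Proof. by rewrite /adj map_mxM trmx_mul. Qed.

Lemma adjK p q (A : 'M[C]_(p, q)) : adj (adj A) = A.
Proof. by apply/matrixP=> i j; rewrite /adj !mxE conjCK. Qed.

Lemma adjD p q (A B : 'M[C]_(p, q)) : adj (A + B) = adj A + adj B.
Proof. by apply/matrixP=> i j; rewrite /adj !mxE rmorphD. Qed.

Lemma adjZ p q c (A : 'M[C]_(p, q)) : adj (c *: A) = c^* *: adj A.
Proof. by apply/matrixP=> i j; rewrite /adj !mxE rmorphM. Qed.

Lemma adj0 p q : adj (0 : 'M[C]_(p, q)) = 0.
Proof. by apply/matrixP=> i j; rewrite /adj !mxE rmorph0. Qed.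

Lemma adj_sum p q I (r : seq I) (P : pred I) (F : I -> 'M[C]_(p, q)) :
  adj (\sum_(i <- r | P i) F i) = \sum_(i <- r | P i) adj (F i).
Proof. by apply: (big_morph _ (@adjD p q) (@adj0 p q)). Qed.

Lemma adjX d (A : 'M[C]_d) k : adj (A ^+ k) = (adj A) ^+ k.
Proof.
elim: k => [|k IH].
  by apply/matrixP=> i j; rewrite /adj !mxE rmorph_nat eq_sym.
by rewrite exprS exprSr -IH -mulmxE adj_mul.
Qed.

Variable d : nat.
Local Notation vec := 'cV[C]_d.

Definition inn (u v : vec) : C := (adj u *m v) 0 0.

Lemma innE u v : inn u v = \sum_i (u i 0)^* * v i 0.
Proof. by rewrite /inn !mxE; apply: eq_bigr => i _; rewrite /adj !mxE. Qed.

Lemma inn_conj u v : inn v u = (inn u v)^*.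
Proof. rewrite !innE rmorph_sum; apply: eq_bigr => i _.
by rewrite rmorphM /= conjCK mulrC. Qed.

Lemma innDr u v w : inn u (v + w) = inn u v + inn u w.
Proof. by rewrite /inn mulmxDr mxE. Qed.
Lemma innZr u c v : inn u (c *: v) = c * inn u v.
Proof. by rewrite /inn -scalemxAr mxE. Qed.
Lemma innDl u v w : inn (v + w) u = inn v u + inn w u.
Proof. by rewrite /inn adjD mulmxDl mxE. Qed.
Lemma innZl u c v : inn (c *: v) u = c^* * inn v u.
Proof. by rewrite /inn adjZ -scalemxAl mxE. Qed.
Lemma innNl u v : inn (- v) u = - inn v u.
Proof. by rewrite -scaleN1r innZl rmorphN1 mulN1r. Qed.
Lemma innNr u v : inn u (- v) = - inn u v.
Proof. by rewrite -scaleN1r innZr mulN1r. Qed.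
Lemma inn0r u : inn u 0 = 0.
Proof. by rewrite /inn mulmx0 mxE. Qed.

Lemma inn_adj u (A : 'M[C]_d) v : inn u (A *m v) = inn (adj A *m u) v.
Proof. by rewrite /inn adj_mul adjK mulmxA. Qed.

Lemma inn_ge0 u : 0 <= inn u u.
Proof. rewrite innE; apply: sumr_ge0 => i _; rewrite -normCKC.
exact: exprn_ge0. Qed.

Lemma inn_eq0 u : inn u u = 0 -> u = 0.
Proof.
rewrite innE => H; apply/matrixP=> i j; rewrite (ord1 j) mxE.
have Hge : forall k : 'I_d, true -> 0 <= (u k 0)^* * u k 0.
  by move=> k _; rewrite -normCKC exprn_ge0.
have := @psumr_eq0P _ _ _ _ Hge H i isT.
by rewrite -normCKC => /eqP; rewrite expf_eq0 /= normr_eq0 => /eqP.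
Qed.

Lemma inn_delta (A : 'M[C]_d) i j : inn (delta_mx i 0) (A *m delta_mx j 0) = A i j.
Proof.
rewrite innE (bigD1 i) //= big1 ?addr0.
  rewrite !mxE !eqxx conjC1 mul1r.
  rewrite (bigD1 j) //= big1 ?addr0; first by rewrite mxE !eqxx mulr1.
  by move=> k /negbTE kj; rewrite mxE kj mulr0.
by move=> k /negbTE ki; rewrite !mxE ki /= conjC0 mul0r.
Qed.
End LinAlg.

Section PSD.
Variable R : realType.
Local Notation C := R[i].
Local Notation adj := (adj R _ _).
Variable d : nat.
Variable rho : 'M[C]_d.
Local Notation inn := (@inn R d).
Hypothesis Hpos : forall v, 0 <= inn v (rho *m v).

Let q v := inn v (rho *m v).

Lemma q_real v : (q v)^* = q v.
Proof. by apply/conj_Creal/ger0_real/Hpos. Qed.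

Lemma herm_form x y : inn x (rho *m y) = (inn y (rho *m x))^*.
Proof.
set a := inn x (rho *m y); set b := inn y (rho *m x).
have E1 : q (x + y) = q x + q y + a + b.
  by rewrite /q mulmxDr !innDl !innDr; rewrite -/a -/b; ring.
have E2 : q (x + 'i *: y) = q x + q y + 'i * a - 'i * b.
  rewrite /q mulmxDr -scalemxAr !innDl !innDr !innZl !innZr -/a -/b conjCi.
  have h : forall z : C, -'i * ('i * z) = z.
    by move=> z; rewrite mulrA mulNr -expr2 sqrCi opprK mul1r.
  rewrite h; ring.
have R1 : (a + b)^* = a + b.
  have -> : a + b = q (x + y) - q x - q y by rewrite E1; ring.
  by rewrite !rmorphB /= !q_real.
have R2 : ('i * a - 'i * b)^* = 'i * a - 'i * b.
  have -> : 'i * a - 'i * b = q (x + 'i *: y) - q x - q y by rewrite E2; ring.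
  by rewrite !rmorphB /= !q_real.
rewrite rmorphD /= in R1. rewrite rmorphB !rmorphM /= conjCi in R2.
have : (a - b^*) *+ 2 = 0.
  have R2' : 'i * (b^* - a^*) = 'i * a - 'i * b by rewrite -R2; ring.
  have R3 : b^* - a^* = a - b.
    by apply: (mulfI (neq0Ci C)); rewrite R2'; ring.
  have -> : (a - b^*) *+ 2 = (a + b - (a^* + b^*)) - (b^* - a^* - (a - b)) by ring.
  by rewrite R1 R3 !subrr.
by move/eqP; rewrite mulrn_eq0 /= subr_eq0 => /eqP.
Qed.

Lemma adj_rho : adj rho = rho.
Proof.
apply/matrixP=> i j; rewrite /Defs.adj !mxE -!inn_delta herm_form.
by rewrite conjCK.
Qed.

Lemma ker_of_q v : q v = 0 -> rho *m v = 0.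
Proof.
move=> qv0; set y := rho *m v.
set s := inn y y; set c := q y.
have sr : s^* = s by apply/conj_Creal/ger0_real/inn_ge0.
have cr : c^* = c by apply: q_real.
have c0 : 0 <= c by apply: Hpos.
have s0 : 0 <= s by apply: inn_ge0.
pose w := (c + 1) *: v - s *: y.
have E : q w = - (s * s * (c + 2)).
  rewrite /q /w mulmxBr -!scalemxAr !innDl !innNl !innDr !innNr !innZl !innZr.
  rewrite -/(q v) qv0 -/(q y) -/c -/y -/s (herm_form v y) -/y -/s sr rmorphD /= cr conjC1.
  ring.
have h : 0 <= s * s * (c + 2) by rewrite !mulr_ge0 // addr_ge0.
have h2 : s * s * (c + 2) = 0.
  apply/eqP; rewrite eq_le h andbT -oppr_ge0 -E; exact: Hpos.
move/eqP: h2; rewrite !mulf_eq0 orbb => /orP [/eqP s00|].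
  by apply: inn_eq0.
move=> h3; have : 0 < c + 2 by rewrite ltr_wpDl.
by rewrite lt_def h3.
Qed.

End PSD.

Section Encl.
Variable R : realType.
Local Notation C := R[i].
Local Notation adj := (adj R _ _).
Variable N : nat.
Variable n : nat -> nat.
Local Notation d := (hdim N n).
Local Notation inn := (@inn R d).
Variables Gamma gam : bool -> bohr N -> R.
Variable rho : 'M[C]_d.
Hypothesis Hpos : forall v, 0 <= inn v (rho *m v).
Hypothesis Hinv : Lgen R N n Gamma gam rho = 0.

Lemma ker_kraus (w : 'cV[C]_d) eps om : rho *m w = 0 ->
  rho *m (adj (kraus R N n Gamma eps om) *m w) = 0.
Proof.
move=> hw.
have wr : adj w *m rho = 0.
  by rewrite -(@adj_rho R d rho Hpos) -adj_mul hw adj0.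
have hl : forall X : 'M[C]_d, adj w *m (X *m rho) *m w = 0.
  by move=> X; rewrite mulmxA -(mulmxA _ rho) hw mulmx0.
have hr : forall X : 'M[C]_d, adj w *m (rho *m X) *m w = 0.
  by move=> X; rewrite mulmxA wr mul0mx mul0mx.
have key : adj w *m Lgen R N n Gamma gam rho *m w =
  \sum_(om : bohr N) \sum_(eps : bool)
     adj (adj (kraus R N n Gamma eps om) *m w) *m rho *m (adj (kraus R N n Gamma eps om) *m w).
  rewrite /Lgen mulmxDr mulmxDl -scalemxAr -scalemxAl mulmxBr mulmxBl hl hr subrr scaler0 add0r.
  rewrite mulmx_sumr mulmx_suml; apply: eq_bigr => o _.
  rewrite mulmx_sumr mulmx_suml; apply: eq_bigr => e _.
  rewrite mulmxBr mulmxBl -scalemxAr -scalemxAl mulmxDr mulmxDl hl hr addr0 scaler0 subr0.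
  by rewrite adj_mul adjK !mulmxA.
have := congr1 (fun M : 'M[C]_1 => M 0 0) key.
rewrite Hinv mulmx0 mul0mx mxE summxE => /esym H0.
have Hge : forall o : bohr N, true -> 0 <= (\sum_(e : bool) (adj (adj (kraus R N n Gamma e o) *m w) *m rho *m (adj (kraus R N n Gamma e o) *m w))) 0 0.
  move=> o _; rewrite summxE; apply: sumr_ge0 => e _.
  by rewrite -mulmxA; apply: Hpos.
have := @psumr_eq0P _ _ _ _ Hge H0 om isT.
rewrite summxE => H1.
have Hge2 : forall e : bool, true -> 0 <= (adj (adj (kraus R N n Gamma e om) *m w) *m rho *m (adj (kraus R N n Gamma e om) *m w)) 0 0.
  by move=> e _; rewrite -mulmxA; apply: Hpos.
have := @psumr_eq0P _ _ _ _ Hge2 H1 eps isT.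
rewrite -mulmxA => H2.
exact: (@ker_of_q R d rho Hpos _ H2).
Qed.

End Encl.

Section Zeta.
Variable R : realType.
Local Notation C := R[i].

Lemma zetaX m k : zeta R m ^+ k =
  Complex (cos (k%:R * (2 * pi / m%:R))) (sin (k%:R * (2 * pi / m%:R))).
Proof.
elim: k => [|k IH]; first by rewrite expr0 !mul0r cos0 sin0.
rewrite exprSr IH /zeta; simpc.
set t := 2 * pi / m%:R.
have -> : (k.+1%:R : R) = k%:R + 1 by rewrite natr1.
rewrite mulrDl mul1r cosD sinD.
by congr Complex; ring.
Qed.

Lemma zeta_m m : (0 < m)%N -> zeta R m ^+ m = 1.
Proof.
move=> m0; rewrite zetaX.
have -> : m%:R * (2 * pi / m%:R) = pi *+ 2 :> R.
  by rewrite mulrCA divff ?pnatr_eq0 -?lt0n // mulr1 mulr_natl.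
by rewrite cos2pi sin2pi.
Qed.

Lemma zeta_neq1 m b : (0 < b < m)%N -> zeta R m ^+ b != 1.
Proof.
case/andP=> b0 bm; rewrite zetaX; apply/eqP; case=> hc _.
pose y : R := b%:R * pi / m%:R.
have hy : b%:R * (2 * pi / m%:R) = y *+ 2.
  by rewrite /y -mulr_natr; ring.
have m0 : (0 < m)%N by apply: leq_trans bm.
have ypos : 0 < y < pi.
  rewrite /y; apply/andP; split.
    by rewrite !mulr_gt0 ?pi_gt0 ?invr_gt0 ?ltr0n.
  rewrite ltr_pdivrMr ?ltr0n // mulrC ltr_pM2l ?pi_gt0 ?ltr_nat //.
move: hc; rewrite hy cos_mulr2n => hc.
have : sin y ^+ 2 = 0.
  rewrite sin2cos2; move/eqP: hc; rewrite subr_eq => /eqP.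
  rewrite -mulr_natr => h.
  have : cos y ^+ 2 = 1 by apply: (mulIf (_ : 2%:R != 0)); rewrite ?pnatr_eq0 // h mul1r.
  by move=> ->; rewrite subrr.
move/eqP; rewrite expf_eq0 /= => /eqP s0.
by have := sin_gt0_pi ypos; rewrite s0 ltxx.
Qed.

Lemma zeta_sum m b : (b < m)%N ->
  \sum_(c < m) zeta R m ^+ (b * c) = if b == 0%N then m%:R else 0.
Proof.
move=> bm; case: eqP => [->|/eqP b0].
  by rewrite (eq_bigr (fun _ => 1)) ?sumr_const ?card_ord // => c _; rewrite mul0n expr0.
have m0 : (0 < m)%N by apply: leq_ltn_trans bm.
have hne : zeta R m ^+ b - 1 != 0 by rewrite subr_eq0 zeta_neq1 // lt0n b0.
have : (zeta R m ^+ b - 1) * \sum_(c < m) zeta R m ^+ (b * c) = 0.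
  rewrite (eq_bigr (fun c : 'I_m => (zeta R m ^+ b) ^+ c)); last by move=> c _; rewrite exprM.
  by rewrite -subrX1 exprAC zeta_m // expr1n subrr.
by move/eqP; rewrite mulf_eq0 (negbTE hne) /= => /eqP.
Qed.

End Zeta.

Section Basis.
Variable R : realType.
Local Notation C := R[i].
Local Notation adj := (adj R _ _).
Variable N : nat.
Variable n : nat -> nat.
Local Notation d := (hdim N n).

Definition xk {k a} (hk : (k < N)%N) (ha : (a < n k)%N) : idx N n :=
  inr (existT (fun k : 'I_N => 'I_(n k)) (Ordinal hk) (Ordinal ha)).

Lemma ketn_ket k a (hk : (k < N)%N) (ha : (a < n k)%N) :
  ketn R N n k a = ket R N n (xk hk ha).
Proof.
apply/matrixP=> i j; rewrite (ord1 j) !mxE /idx_of eqxx andbT.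
have -> : (i == enum_rank (xk hk ha)) = (enum_val i == xk hk ha).
  by apply/eqP/eqP => [->|<-]; [rewrite enum_rankK | rewrite enum_valK].
case: (enum_val i) => [b|s] //.
suff -> : (inr s == xk hk ha) = (((tag s : nat) == k) && ((tagged s : nat) == a)) by [].
apply/idP/idP => [/eqP h | /andP [/eqP e1 /eqP e2]]; last first.
  case: s e1 e2 => k' a' /= e1 e2.
  have ek : k' = Ordinal hk by apply: val_inj.
  subst k'; apply/eqP; congr inr; congr existT; exact: val_inj.
by case: h => -> /=; rewrite !eqxx.
Qed.

Arguments ketn_ket {k a}.

Lemma adj_delta (i : 'I_d) : adj (delta_mx i 0 : 'cV[C]_d) = delta_mx 0 i.
Proof.
apply/matrixP=> a b; rewrite /Defs.adj !mxE.
by rewrite andbC; case: (_ && _); rewrite /= ?conjC0 ?conjC1.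
Qed.

Lemma ket_orth (x y : idx N n) :
  adj (ket R N n x) *m ket R N n y = ((x == y)%:R)%:M.
Proof.
rewrite /ket adj_delta mul_delta_mx_cond (inj_eq enum_rank_inj).
apply/matrixP=> a b; rewrite (ord1 a) (ord1 b) !mxE.
by case: (x == y); rewrite ?mulr1n ?mulr0n !mxE ?eqxx.
Qed.

Lemma ketn_orth k (hk : (k < N)%N) (a c : 'I_(n k)) :
  adj (ketn R N n k a) *m ketn R N n k c = ((a == c)%:R)%:M.
Proof.
rewrite (ketn_ket hk (ltn_ord a)) (ketn_ket hk (ltn_ord c)) ket_orth.
suff -> : (xk hk (ltn_ord a) == xk hk (ltn_ord c)) = (a == c) by [].
apply/idP/idP => [/eqP h|/eqP ->] //.
apply/eqP.
apply: val_inj.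
by have := congr1 (fun x : idx N n => if x is inr s then (tagged s : nat) else 0%N) h.
Qed.

Lemma Zk_ketn k (hk : (k < N)%N) (c : 'I_(n k)) :
  Zk R N n k *m ketn R N n k c =
  isqrt R (n k) *: \sum_(b < n k.+1) zeta R (n k) ^+ (b * c) *: ketn R N n k.+1 b.
Proof.
rewrite /Zk -scalemxAl mulmx_suml; congr (_ *: _); apply: eq_bigr => b _.
rewrite mulmx_suml (bigD1 c) //= big1 ?addr0.
  by rewrite -scalemxAl /ketbra -mulmxA ketn_orth // eqxx mul_mx_scalar scale1r.
move=> a /negbTE ac.
by rewrite -scalemxAl /ketbra -mulmxA ketn_orth // ac mul_mx_scalar scale0r scaler0.
Qed.

End Basis.

Section Comp.
Variable R : realType.
Local Notation C := R[i].
Local Notation adj := (adj R _ _).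
Variable N : nat.
Variable n : nat -> nat.
Local Notation d := (hdim N n).
Local Notation ketn := (ketn R N n).
Local Notation Zk := (Zk R N n).

Lemma phi0E k : phi R N n k 0 = isqrt R (n k) *: \sum_(b < n k) ketn k b.
Proof.
rewrite /phi; congr (_ *: _); apply: eq_bigr => b _.
by rewrite muln0 expr0 invr1 scale1r.
Qed.

Lemma Zk_ketn0 k (hk : (k < N)%N) (h0 : (0 < n k)%N) :
  Zk k *m ketn k 0 = isqrt R (n k) *: \sum_(b < n k.+1) ketn k.+1 b.
Proof.
have := @Zk_ketn R N n k hk (Ordinal h0); rewrite /= => ->.
congr (_ *: _); apply: eq_bigr => b _.
by rewrite muln0 expr0 scale1r.
Qed.

Lemma Zk_phi0 k (hk1 : (k.+1 < N)%N) (h1 : (0 < n k.+1)%N) (hm : (n k.+1 <= n k)%N) :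
  Zk k *m phi R N n k 0 =
  (isqrt R (n k) * isqrt R (n k) * (n k)%:R) *: ketn k.+1 0.
Proof.
have hk : (k < N)%N by apply: ltn_trans hk1.
rewrite phi0E -scalemxAr mulmx_sumr.
rewrite (eq_bigr (fun c : 'I_(n k) => isqrt R (n k) *:
   \sum_(b < n k.+1) zeta R (n k) ^+ (b * c) *: ketn k.+1 b)); last first.
  by move=> c _; apply: Zk_ketn.
rewrite -scaler_sumr exchange_big /=.
rewrite (eq_bigr (fun b : 'I_(n k.+1) => (\sum_(c < n k) zeta R (n k) ^+ (b * c)) *: ketn k.+1 b)); last first.
  by move=> b _; rewrite scaler_suml.
rewrite (bigD1 (Ordinal h1)) //= [X in _ + X]big1 ?addr0.
  rewrite zeta_sum ?eqxx; last by apply: leq_trans h1 hm.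
  by rewrite !scalerA mulrA.
move=> b hb; rewrite zeta_sum; last by apply: leq_trans (ltn_ord b) hm.
have -> : (b == 0 :> nat) = false.
  by apply/negbTE; apply: contra hb => /eqP hb0; apply/eqP; apply: val_inj.
by rewrite scale0r.
Qed.

End Comp.

Section Main.
Variable R : realType.
Local Notation C := R[i].
Local Notation adj := (adj R _ _).

Lemma isqrt_neq0 m : (0 < m)%N -> isqrt R m != 0.
Proof.
move=> m0; apply/eqP; rewrite /isqrt /RtoC => -[] /eqP.
by rewrite invr_eq0 sqrtr_eq0 leNgt ltr0n m0.
Qed.

Lemma sqrtC_neq0 (x : R) : 0 < x -> Defs.sqrtC R x != 0.
Proof.
move=> x0; apply/eqP; rewrite /Defs.sqrtC /RtoC => -[] /eqP.
by rewrite sqrtr_eq0 leNgt x0.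
Qed.

Lemma scale_cancel d (rho : 'M[C]_d) (c : C) (v : 'cV[C]_d) :
  c != 0 -> rho *m (c *: v) = 0 -> rho *m v = 0.
Proof.
move=> c0; rewrite -scalemxAr => h.
by rewrite -(scale1r (rho *m v)) -(mulVf c0) -scalerA h scaler0.
Qed.

End Main.

Theorem proposition3p11 (R : realType) (N : nat) (n : nat -> nat)
  (HN : (2 <= N)%N)
  (Hn_pos : forall k, (k < N)%N -> (1 <= n k)%N)
  (Hn_mono : forall k, (k.+1 < N)%N -> (n k.+1 <= n k)%N)
  (Gamma gam : bool -> bohr N -> R)
  (HGamma : forall eps w, 0 < Gamma eps w)
  (rho : 'M[R[i]]_(hdim N n))
  (Hstate : is_state R N n rho)
  (Hinv : is_invariant R N n Gamma gam rho)
  (Hsupp : supported_on R N n rho (Omega R N n)) :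
  supported_on R N n rho (V R N n).
Proof.
have Hpos : forall v, 0 <= @inn R _ v (rho *m v) := Hstate.1.
have Herm := @herm_form R _ rho Hpos.
pose ker (w : 'cV[R[i]]_(hdim N n)) := rho *m w = 0.
have base : forall w, (forall u, @inn R _ w (rho *m u) = 0) -> ker w.
  move=> w h; apply: inn_eq0.
  by rewrite Herm h conjC0.
have kerZ : forall k w, (k < N.-1)%N -> ker w -> ker (Zk R N n k *m w).
  move=> k w hk hw.
  have := @ker_kraus R N n Gamma gam rho Hpos Hinv w true (inr (Ordinal hk)) hw.
  have -> : kraus R N n Gamma true (inr (Ordinal hk)) = Defs.sqrtC R (Gamma true (inr (Ordinal hk))) *: adj R _ _ (Zk R N n k) by [].
  rewrite adjZ adjK -scalemxAl; apply: scale_cancel.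
  by rewrite conjC_eq0 sqrtC_neq0.
have kerZa : forall k w, (k < N.-1)%N -> ker w -> ker (adj R _ _ (Zk R N n k) *m w).
  move=> k w hk hw.
  have := @ker_kraus R N n Gamma gam rho Hpos Hinv w false (inr (Ordinal hk)) hw.
  have -> : kraus R N n Gamma false (inr (Ordinal hk)) = Defs.sqrtC R (Gamma false (inr (Ordinal hk))) *: Zk R N n k by [].
  rewrite adjZ -scalemxAl; apply: scale_cancel.
  by rewrite conjC_eq0 sqrtC_neq0.
have kerZop : forall w, ker w -> ker (Zop R N n *m w).
  move=> w hw; rewrite /ker /Zop mulmx_suml mulmx_sumr big1 // => k _.
  exact: kerZ.
have kerZopa : forall w, ker w -> ker (adj R _ _ (Zop R N n) *m w).
  move=> w hw; rewrite /ker /Zop adj_sum mulmx_suml mulmx_sumr big1 // => k _.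
  exact: kerZa.
have kerX : forall (A : 'M[R[i]]_(hdim N n)), (forall w, ker w -> ker (A *m w)) ->
    forall m w, ker w -> ker (A ^+ m *m w).
  move=> A hA; elim=> [|m IH] w hw; first by rewrite expr0 mul1mx.
  by rewrite exprS -mulmxE -mulmxA; apply: hA; apply: IH.
have gens : forall w, Omega_gens R N n w -> ker w.
  move=> w hw; apply: base => u; exact: (Hsupp u w hw).
have kphi01 : ker (phi01 R N n) by apply: gens; right; right; left.
have kphi0N : ker (phi0N R N n) by apply: gens; right; right; right.
have keven : forall m, (m.*2 <= N - 1)%N -> ker (phi R N n m.*2 0).
  elim=> [|m IH] hm; first exact: kphi01.
  have hm' : (m.*2 <= N - 1)%N by lia.
  have k0 := IH hm'.
  set k := m.*2.
  have hk1 : (k.+1 < N)%N by rewrite /k; lia.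
  have hk2 : (k.+2 < N)%N by rewrite /k; lia.
  have h1 := kerZ k _ (ltac:(rewrite /k; lia) : (k < N.-1)%N) k0.
  have hk1N : (k < N)%N by rewrite /k; lia.
  rewrite /ker (@Zk_phi0 R N n k hk1 (Hn_pos _ hk1) (Hn_mono _ hk1)) in h1.
  apply scale_cancel in h1; last first.
    rewrite !mulf_neq0 // ?isqrt_neq0 ?pnatr_eq0 -?lt0n; by [apply: Hn_pos | lia].
  have h2 := kerZ k.+1 _ (ltac:(rewrite /k; lia) : (k.+1 < N.-1)%N) h1.
  rewrite /ker (@Zk_ketn0 R N n k.+1 hk1 (Hn_pos _ hk1)) in h2.
  apply scale_cancel in h2; last by rewrite isqrt_neq0 ?Hn_pos.
  have -> : m.+1.*2 = k.+2 by rewrite /k doubleS.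
  by rewrite /ker phi0E -scalemxAr h2 scaler0.
move=> u w hw.
have : ker w.
  case: hw => [->|[->|[[m [_ ->]]|[[m [_ ->]]|[m [s [/andP [hm1 hm2] [_ ->]]]]]]]].
  - by apply: gens; left.
  - by apply: gens; right; left.
  - by apply: kerX.
  - by apply: kerX.
  apply: (kerX _ kerZopa); rewrite mul2n; apply: keven.
  by move: hm2; rewrite leq_divRL // muln2.
rewrite /ker => hk.
change (@inn R _ w (rho *m u) = 0).
by rewrite Herm hk inn0r conjC0.
Qed.
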